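(* Let $G$ be a modulo transmission irregular graph and let $H$ be a connected graph such that $|V(G)|$ and $|V(H)|$ are relatively prime. Then: (i) if $H$ is transmission irregular, then the Cartesian product $G\square H$ is transmission irregular; (ii) if $H$ is modulo transmission irregular, then $G\square H$ is modulo transmission irregular.
   Context: For a connected graph $X$, $Tr_X(x)=\sum_{y\in V(X)}d_X(x,y)$ is the transmission of vertex $x$. A connected graph is transmission irregular (TI) if no two vertices have equal transmissions, and modulo transmission irregular (MTI) if no two distinct vertices have transmissions congruent modulo the number of vertices of the graph. The Cartesian product $G\square H$ has vertex set $V(G)\times V(H)$, with $(u_G,u_H)$ adjacent to $(v_G,v_H)$ iff either $u_G=v_G$ and $u_Hv_H\in E(H)$, or $u_Gv_G\in E(G)$ and $u_H=v_H$. *)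

(* Defs.v *)
From mathcomp Require Import all_boot.
Set Implicit Arguments. Unset Strict Implicit. Unset Printing Implicit Defensive.

Section Graphs.
Variable T : finType.
Variable e : rel T.

Definition simple_graph : Prop := symmetric e /\ irreflexive e.

Definition connected_graph : Prop := 0 < #|T| /\ forall x y : T, connect e x y.

Definition walkb (n : nat) (x y : T) : bool :=
  [exists p : n.-tuple T, path e x p && (last x p == y)].

(* shortest-path distance: least n < #|T| with a walk of length n
   (meaningful for connected graphs, where such n always exists) *)
Definition dist (x y : T) : nat := find (fun n => walkb n x y) (iota 0 #|T|).

Definition transmission (x : T) : nat := \sum_(y : T) dist x y.

Definition TI : Prop := forall x y : T, transmission x = transmission y -> x = y.

Definition MTI : Prop :=
  forall x y : T, transmission x = transmission y %[mod #|T|] -> x = y.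
End Graphs.

Definition cartesian (T1 T2 : finType) (eG : rel T1) (eH : rel T2) : rel (T1 * T2) :=
  fun u v => ((u.1 == v.1) && eH u.2 v.2) || (eG u.1 v.1 && (u.2 == v.2)).

(* Main.v *)
Require Import Defs.
From mathcomp Require Import all_boot.
From mathcomp Require Import zify.
Set Implicit Arguments. Unset Strict Implicit.

Section Dist.
Variable T : finType.
Variable e : rel T.

Definition W n (x y : T) := exists p : seq T, [/\ size p = n, path e x p & last x p = y].

Lemma walkbP n x y : reflect (W n x y) (walkb e n x y).
Proof.
apply: (iffP existsP) => [[p /andP[Hp /eqP Hl]]|[p [Hs Hp Hl]]].
  by exists (val p); rewrite size_tuple.
have Hs' : size p == n by apply/eqP.
by exists (Tuple Hs'); rewrite /= Hp Hl eqxx.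
Qed.

Lemma W0 x : W 0 x x.
Proof. by exists [::]. Qed.

Lemma Wcons n x y z : e x y -> W n y z -> W n.+1 x z.
Proof. by move=> Hxy [p [Hs Hp Hl]]; exists (y :: p); rewrite /= Hxy Hp Hs. Qed.

Lemma Wcat m n x y z : W m x y -> W n y z -> W (m + n) x z.
Proof.
move=> [p [Hs Hp Hl]] [q [Hs' Hq Hl']]; exists (p ++ q).
by rewrite size_cat cat_path last_cat Hl Hp Hq Hs Hs'.
Qed.

Lemma W_short n x y : W n x y -> exists2 m, m < #|T| & W m x y.
Proof.
move=> [p [_ Hp Hl]]; case: (shortenP Hp) Hl => p' Hp' Hu _ Hl.
exists (size p'); last by exists p'.
have := max_card (mem (x :: p')); rewrite (card_uniqP Hu) /=. done.
Qed.

Lemma dist_spec x y n : W n x y -> W (dist e x y) x y /\ forall m, W m x y -> dist e x y <= m.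
Proof.
move=> Hn; have [m Hm HWm] := W_short Hn.
have Hhas : has (fun k => walkb e k x y) (iota 0 #|T|).
  by apply/hasP; exists m; [rewrite mem_iota | apply/walkbP].
have Hlt : dist e x y < #|T| by have := Hhas; rewrite has_find size_iota.
split.
  apply/walkbP; have := nth_find 0 Hhas; rewrite nth_iota //.
move=> k Hk; case: (ltnP k #|T|) => Hk'; last by apply: ltnW; apply: leq_trans Hlt Hk'.
rewrite leqNgt; apply/negP => Hlt2.
have := before_find 0 Hlt2; rewrite nth_iota // add0n.
by move/negbT/walkbP.
Qed.
End Dist.
Lemma conn_W (T : finType) (e : rel T) x y : connect e x y -> exists n, W e n x y.
Proof. by case/connectP => p Hp Hl; exists (size p), p. Qed.

Section Prod.
Variables (T1 T2 : finType) (eG : rel T1) (eH : rel T2).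
Let eC := cartesian eG eH.

Lemma Wmap1 n g g' h : W eG n g g' -> W eC n (g, h) (g', h).
Proof.
move=> [p [Hs Hp Hl]]; exists (map (fun x => (x, h)) p).
rewrite size_map last_map Hl Hs; split => //.
elim: p g Hp {Hs Hl} => //= a p IH g /andP[Ha Hp].
by rewrite IH // /eC /cartesian /= Ha eqxx orbT.
Qed.

Lemma Wmap2 n g h h' : W eH n h h' -> W eC n (g, h) (g, h').
Proof.
move=> [p [Hs Hp Hl]]; exists (map (fun x => (g, x)) p).
rewrite size_map last_map Hl Hs; split => //.
elim: p h Hp {Hs Hl} => //= a p IH h /andP[Ha Hp].
by rewrite IH // /eC /cartesian /= Ha eqxx.
Qed.

Lemma Wproj n u v : W eC n u v ->
  exists a b, [/\ a + b = n, W eG a u.1 v.1 & W eH b u.2 v.2].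
Proof.
move=> [p [Hs Hp Hl]]; subst n v.
elim: p u Hp => [|w p IH] u /=.
  by move=> _; exists 0, 0; split => //; apply: W0.
case/andP => Huw /IH [a [b [Hab HA HB]]].
case/orP: Huw => /andP[].
  move=> /eqP E Hh; exists a, b.+1; split; first by rewrite -Hab addnS.
    by rewrite E.
  by apply: Wcons Hh HB.
move=> Hg /eqP E; exists a.+1, b; split; first by rewrite -Hab.
  by apply: Wcons Hg HA.
by rewrite E.
Qed.

Lemma dist_cart u v : connected_graph eG -> connected_graph eH ->
  dist eC u v = dist eG u.1 v.1 + dist eH u.2 v.2.
Proof.
move=> [_ cG] [_ cH]; case: u v => g h [g' h'] /=.
have [nG HnG] := conn_W (cG g g').
have [nH HnH] := conn_W (cH h h').
have [WG mG] := dist_spec HnG.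
have [WH mH] := dist_spec HnH.
have WC : W eC (dist eG g g' + dist eH h h') (g, h) (g', h').
  exact: Wcat (Wmap1 h WG) (Wmap2 g' WH).
have [WC' mC] := dist_spec WC.
apply/eqP; rewrite eqn_leq mC //=.
have [a [b [Hab HA HB]]] := Wproj WC'.
by rewrite -Hab leq_add // ?mG ?mH.
Qed.
End Prod.
Lemma mod_cancel n m a b : coprime m n -> n * a = n * b %[mod m] -> a = b %[mod m].
Proof.
move=> Hc.
wlog le_ba : a b / b <= a.
  move=> Hw; case: (leqP b a) => H; first exact: Hw.
  by move=> E; symmetry; apply: Hw => //; exact: ltnW.
move/eqP; rewrite eqn_mod_dvd ?leq_mul2l ?le_ba ?orbT // -mulnBr mulnC Gauss_dvdl //.
by rewrite -eqn_mod_dvd // => /eqP.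
Qed.

Lemma trans_cart (T1 T2 : finType) (eG : rel T1) (eH : rel T2) g h :
  connected_graph eG -> connected_graph eH ->
  transmission (cartesian eG eH) (g, h) =
  #|T2| * transmission eG g + #|T1| * transmission eH h.
Proof.
move=> cG cH; rewrite /transmission.
rewrite (eq_bigr (fun v => dist eG g v.1 + dist eH h v.2)); last first.
  by move=> v _; rewrite dist_cart.
rewrite -(pair_bigA _ (fun a b => dist eG g a + dist eH h b)) /=.
under eq_bigr => i _ do rewrite big_split /= sum_nat_const.
rewrite big_split /= -big_distrr /=.
by rewrite sum_nat_const cardT enumT.
Qed.
Theorem theorem2 (T1 T2 : finType) (eG : rel T1) (eH : rel T2) :
  simple_graph eG -> connected_graph eG -> MTI eG ->
  simple_graph eH -> connected_graph eH ->
  coprime #|T1| #|T2| ->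
  (TI eH -> TI (cartesian eG eH)) /\ (MTI eH -> MTI (cartesian eG eH)).
Proof.
move=> _ cG mG _ cH cop.
have n1p : 0 < #|T1| by case: cG.
have key : forall g g' h h', transmission (cartesian eG eH) (g, h) =
      transmission (cartesian eG eH) (g', h') %[mod #|T1| * #|T2|] ->
    g = g' /\ #|T1| * transmission eH h = #|T1| * transmission eH h' %[mod #|T1| * #|T2|].
  move=> g g' h h'; rewrite !trans_cart // => E.
  have E1 : #|T2| * transmission eG g = #|T2| * transmission eG g' %[mod #|T1|].
    have := congr1 (modn ^~ #|T1|) E; rewrite /= !modn_dvdm ?dvdn_mulr //.
    by rewrite ![_ + #|T1| * _]addnC ![#|T1| * _]mulnC !modnMDl.
  have Eg := mG _ _ (mod_cancel cop E1); subst g'; split => //.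
  by apply/eqP; move/eqP: E; rewrite eqn_modDl.
split.
  move=> tH [g h] [g' h'] E.
  have [Eg _] := key g g' h h' (congr1 (modn ^~ (#|T1| * #|T2|)) E).
  subst g'; rewrite !trans_cart // in E; move/addnI/eqP: E; rewrite eqn_pmul2l // => /eqP.
  by move/tH => ->.
move=> mH [g h] [g' h']; rewrite card_prod => E.
have [<- E2] := key g g' h h' E.
congr (_, _); apply: mH.
by apply/eqP; rewrite -(eqn_pmul2l n1p) !muln_modr // E2.
Qed.
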